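(* Let $M$ be a simple binary matroid of rank $r+1$. Then $\operatorname{si}(M/e)\cong PG(r-1,2)$ for all $e\in E(M)$ if and only if $M$ is isomorphic to the matroid obtained from $PG(r,2)$ by deleting the elements of a rank-$(r-i)$ flat, for some $i\in\{0,1,\dots,r\}$.
   Context: $\operatorname{si}$ denotes simplification. $PG(r,2)$ is the binary projective geometry of rank $r+1$; the matroid obtained by deleting a rank-$(r-i)$ flat from it does not depend on the choice of that flat (the rank-$0$ flat is empty). *)

(* Defs.v *)
From HB Require Import structures.
From mathcomp Require Import all_boot all_order all_algebra.
Set Implicit Arguments. Unset Strict Implicit. Unset Printing Implicit Defensive.
Import GRing.Theory.

Local Open Scope nat_scope.

(* A (raw) finite set system with a rank function: the ground set is a
   finite subset of a finType T, the rank function is only meaningful on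
   subsets of the ground set. *)
Record matroid (T : finType) := Matroid {
  ground : {set T};
  rk : {set T} -> nat }.

Definition is_matroid (T : finType) (M : matroid T) : Prop :=
  [/\ forall X : {set T}, X \subset ground M -> rk M X <= #|X|,
      forall X Y : {set T}, X \subset Y -> Y \subset ground M -> rk M X <= rk M Y &
      forall X Y : {set T}, X \subset ground M -> Y \subset ground M ->
        rk M (X :|: Y) + rk M (X :&: Y) <= rk M X + rk M Y].

Definition span_rank (n : nat) (X : {set 'rV['F_2]_n}) : nat :=
  \rank (\big[addsmx/(0 : 'M['F_2]_n)%R]_(v in X) <<v>>%MS).

Definition binary (T : finType) (M : matroid T) : Prop :=
  exists n (f : T -> 'rV['F_2]_n),
    forall X : {set T}, X \subset ground M -> rk M X = \rank (\big[addsmx/(0 : 'M['F_2]_n)%R]_(x in X) <<f x>>%MS).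

Definition loop (T : finType) (M : matroid T) (x : T) : bool :=
  rk M [set x] == 0.

Definition parallel (T : finType) (M : matroid T) (x y : T) : bool :=
  [&& x \in ground M, y \in ground M, ~~ loop M x, ~~ loop M y &
      rk M [set x; y] == 1].

Definition simple (T : finType) (M : matroid T) : Prop :=
  (forall x, x \in ground M -> rk M [set x] = 1) /\
  (forall x y, x \in ground M -> y \in ground M -> x != y ->
     rk M [set x; y] = 2).

Definition restrict (T : finType) (M : matroid T) (S : {set T}) : matroid T :=
  Matroid (S :&: ground M) (rk M).

Definition contract (T : finType) (M : matroid T) (e : T) : matroid T :=
  Matroid (ground M :\ e) (fun X => rk M (e |: X) - rk M [set e]).

(* Simplification: delete loops and keep one (the enum_rank-least)
   representative of each parallel class. *)
Definition si_set (T : finType) (M : matroid T) : {set T} :=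
  [set x in ground M | ~~ loop M x &&
     [forall y, parallel M x y ==> (enum_rank x <= enum_rank y)]].

Definition si (T : finType) (M : matroid T) : matroid T :=
  restrict M (si_set M).

Definition iso (T T' : finType) (M : matroid T) (N : matroid T') : Prop :=
  exists phi : T -> T',
    [/\ {in ground M &, injective phi},
        phi @: ground M = ground N &
        forall X : {set T}, X \subset ground M -> rk N (phi @: X) = rk M X].

(* The binary projective geometry of rank n, i.e. PG(n-1,2):
   the vector matroid of all nonzero vectors of GF(2)^n. *)
Definition PGr (n : nat) : matroid 'rV['F_2]_n :=
  Matroid [set v : 'rV['F_2]_n | v != 0%R] (@span_rank n).

Definition flat (T : finType) (M : matroid T) (F : {set T}) : Prop :=
  F \subset ground M /\
  forall x, x \in ground M -> x \notin F -> rk M F < rk M (x |: F).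

(* Main.v *)
Require Import Defs.
From mathcomp Require Import all_boot all_order all_algebra.
Set Implicit Arguments. Unset Strict Implicit. Unset Printing Implicit Defensive.
Import GRing.Theory.
Local Open Scope ring_scope.

Definition spf (T : finType) n (h : T -> 'rV['F_2]_n) (X : {set T}) : 'M['F_2]_n :=
  \big[addsmx/(0 : 'M['F_2]_n)%R]_(x in X) <<h x>>%MS.

Lemma F2_cases (a : 'F_2) : a = 0 \/ a = 1.
Proof. case: a => [[|[|k]]] //= H; [left|right]; exact/val_inj. Qed.

Lemma vaddvv n (v : 'rV['F_2]_n) : v + v = 0.
Proof. apply/matrixP=> i j; rewrite !mxE; case: (F2_cases (v i j)) => ->. rewrite addr0. done. exact/val_inj. Qed.

Lemma F2line n (a b : 'rV['F_2]_n) : (a <= b)%MS -> a != 0 -> a = b.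
Proof.
case/submxP=> k ->; rewrite [k]mx11_scalar mul_scalar_mx.
by case: (F2_cases (k 0 0)) => ->; rewrite ?scale0r ?eqxx // scale1r.
Qed.

Lemma span_closed n (F : {set 'rV['F_2]_n}) :
  (forall v w, v \in F -> w \in F -> v != w -> v + w \in F) ->
  forall v, (v <= spf id F)%MS -> v = 0 \/ v \in F.
Proof.
move=> clF; rewrite /spf.
apply: (big_ind (fun W : 'M_n => forall v, (v <= W)%MS -> v = 0 \/ v \in F)).
- by move=> v; rewrite submx0 => /eqP ->; left.
- move=> W1 W2 H1 H2 v /sub_addsmxP [u ->].
  have [->|h1] := H1 _ (submxMl u.1 W1); have [->|h2] := H2 _ (submxMl u.2 W2).
  + by left; rewrite addr0.
  + by right; rewrite add0r.
  + by right; rewrite addr0.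
  + have [e|ne] := eqVneq (u.1 *m W1) (u.2 *m W2); first by left; rewrite e vaddvv.
    by right; apply: clF.
- move=> x xF v; rewrite genmxE => sv.
  have [->|nz] := eqVneq v 0; first by left.
  by right; rewrite (F2line sv nz).
Qed.


Definition rep (T : finType) (M : matroid T) k (g : T -> 'rV['F_2]_k) :=
  forall X : {set T}, X \subset ground M -> rk M X = \rank (spf g X).

Lemma spfMr (T : finType) n m (h : T -> 'rV['F_2]_m) (B : 'M['F_2]_(m, n)) (X : {set T}) :
  (spf (fun x => h x *m B) X :=: spf h X *m B)%MS.
Proof.
rewrite /spf; apply/eqmx_sym; apply: eqmx_trans (sumsmxMr_gen _ _ _) _.
rewrite (eq_bigr (fun x => <<h x *m B>>%MS)) //.
by move=> x _; apply: eq_genmx; apply: eqmxMr; apply: genmxE.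
Qed.

Lemma binary_rep (T : finType) (M : matroid T) k :
  binary M -> rk M (ground M) = k -> exists g : T -> 'rV['F_2]_k, rep M g.
Proof.
case=> n [f hf] hk.
set A := spf f (ground M).
have rA : \rank A = k by rewrite -hk hf.
suff: forall m (B : 'M['F_2]_(m, n)), row_free B -> (B :=: A)%MS -> m = k ->
   exists g : T -> 'rV['F_2]_k, rep M g.
  by move=> /(_ _ (row_base A) (row_base_free A) (eq_row_base A) rA).
move=> m B fB eBA mk; subst m.
exists (fun x => f x *m pinvmx B) => X sX.
rewrite hf // -(mxrankMfree _ fB).
have := spfMr (fun x => f x *m pinvmx B) B X; move/eqmxP/eqmx_rank => <-; rewrite /spf.
congr (\rank _); apply: eq_bigr => x xX.
rewrite mulmxKpV // eBA /A /spf (sumsmx_sup x) ?genmxE //.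
exact: (subsetP sX).
Qed.


Section Spf.
Variables (T : finType) (n : nat) (h : T -> 'rV['F_2]_n).

Lemma spf1 (x : T) : spf h [set x] = <<h x>>%MS.
Proof. by rewrite /spf big_set1. Qed.

Lemma spfU1 (x : T) (X : {set T}) : x \notin X -> spf h (x |: X) = (<<h x>> + spf h X)%MS.
Proof. by move=> xX; rewrite /spf big_setU1. Qed.

Lemma spf_sup (x : T) (X : {set T}) : x \in X -> (h x <= spf h X)%MS.
Proof. by move=> xX; rewrite /spf (sumsmx_sup x) ?genmxE. Qed.

Lemma spf_sub m (X : {set T}) (W : 'M_(m, n)) : (forall x, x \in X -> (h x <= W)%MS) -> (spf h X <= W)%MS.
Proof. by move=> H; apply/sumsmx_subP => x xX; rewrite genmxE H. Qed.

Lemma spf_imset (X : {set T}) : {in X &, injective h} -> spf id (h @: X) = spf h X.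
Proof. by move=> hi; rewrite /spf big_imset. Qed.

Lemma rank1 (x : T) : h x != 0 -> \rank <<h x>>%MS = 1%N.
Proof. by move=> nz; rewrite genmxE rank_rV nz. Qed.
End Spf.

Section SiRep.
Variables (T : finType) (N : matroid T) (r : nat) (h : T -> 'rV['F_2]_r).
Hypothesis hN : rep N h.
Hypothesis hnz : forall x, x \in ground N -> h x != 0.

Lemma par_iff x y : x \in ground N -> y \in ground N ->
  parallel N x y = (h x == h y).
Proof.
move=> xN yN; rewrite /parallel xN yN /loop.
have sx : [set x] \subset ground N by rewrite sub1set.
have sy : [set y] \subset ground N by rewrite sub1set.
have sxy : [set x; y] \subset ground N by rewrite subUset sx sy.
rewrite !hN // !spf1 !rank1 ?hnz //=.
have s1 : (h x <= spf h [set x; y])%MS by apply: spf_sup; rewrite !inE eqxx.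
have s2 : (h y <= spf h [set x; y])%MS by apply: spf_sup; rewrite !inE eqxx orbT.
apply/idP/idP.
- move/eqP=> e1.
  have e2 : \rank (h x) = \rank (spf h [set x; y]) by rewrite rank_rV hnz.
  have s3 : (spf h [set x; y] <= h x)%MS by rewrite -(mxrank_leqif_sup s1).2 e2 eqxx.
  have : (h y <= h x)%MS by apply: submx_trans s2 s3.
  by move/F2line => /(_ (hnz yN)) ->.
- move/eqP=> e; apply/eqP.
  have eq : (spf h [set x; y] == h x)%MS.
    rewrite s1 andbT; apply: spf_sub => z; rewrite !inE => /orP[] /eqP ->;
    by rewrite ?e.
  by rewrite (eqmx_rank eq) rank_rV hnz.
Qed.

Lemma si_ground : ground (si N) \subset ground N.
Proof. by rewrite /si /restrict /= subsetIr. Qed.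

Lemma si_inj : {in ground (si N) &, injective h}.
Proof.
move=> x y; rewrite /si /restrict /= !inE => /andP[/andP[xN /andP[_ /forallP Hx]] _].
move=> /andP[/andP[yN /andP[_ /forallP Hy]] _] e.
have := Hx y; have := Hy x; rewrite !par_iff // e eqxx /= => a b.
by apply: enum_rank_inj; apply: val_inj; apply/eqP; rewrite eqn_leq a b.
Qed.

Lemma si_img : h @: ground (si N) = h @: ground N.
Proof.
apply/eqP; rewrite eqEsubset imsetS ?si_ground //=.
apply/subsetP=> _ /imsetP[x xN ->].
pose P z := (z \in ground N) && (h z == h x).
have Px : P x by rewrite /P xN eqxx.
case: (arg_minnP (fun z => enum_rank z : nat) Px) => y /andP[yN /eqP hy] ymin.
apply/imsetP; exists y => //.
rewrite /si /restrict /= !inE yN andbT /loop hN ?sub1set // spf1 rank1 ?hnz //=.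
apply/forallP=> z; apply/implyP => pyz.
have zN : z \in ground N by case/and5P: pyz.
rewrite par_iff // in pyz; apply: ymin; rewrite /P zN -hy eq_sym //.
Qed.

Lemma iso_si_iff :
  iso (si N) (PGr r) <-> h @: ground N = ground (PGr r).
Proof.
split.
- case=> phi [phii phiim _].
  rewrite -si_img; apply/eqP; rewrite eqEcard.
  have -> : h @: ground (si N) \subset ground (PGr r).
    apply/subsetP=> _ /imsetP[x xN ->]; rewrite /PGr inE /=.
    by apply: hnz; apply: (subsetP si_ground).
  rewrite -phiim !card_in_imset //.
  by rewrite /= leqnn.
  exact: si_inj.
- move=> himg; exists h; split; first exact: si_inj.
    by rewrite si_img.
  move=> X sX; rewrite /PGr /= /span_rank.
  have -> : \rank (\big[addsmx/(0 : 'M['F_2]_r)%R]_(v in h @: X) <<v>>%MS) = \rank (spf h X).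
    rewrite -spf_imset //.
    by move=> x y xX yX; apply: si_inj; apply: (subsetP sX).
  rewrite /si /restrict /= hN //; apply: subset_trans sX _; exact: si_ground.
Qed.
End SiRep.


Lemma exists_L k (u : 'rV['F_2]_k.+1) : u != 0 ->
  exists L : 'M['F_2]_(k.+1, k),
    (forall v : 'rV_k.+1, (v *m L == 0) = (v <= u)%MS) /\ row_full L.
Proof.
move=> unz; set K := cokermx u.
have rK : \rank K = k by rewrite mxrank_coker rank_rV unz subn1.
suff: forall m (C : 'M['F_2]_(k.+1, m)),
    (forall v : 'rV_k.+1, (v *m C == 0) = (v <= u)%MS) -> row_full C -> m = k ->
    exists L : 'M['F_2]_(k.+1, k),
    (forall v : 'rV_k.+1, (v *m L == 0) = (v <= u)%MS) /\ row_full L.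
  move/(_ _ (col_base K)); apply=> [v||]; last by [].
    have e1 : v *m K = v *m col_base K *m row_base K by rewrite -mulmxA mulmx_base.
    by rewrite submxE -/K e1 (mulmx_free_eq0 _ (row_base_free K)).
  exact: col_base_full.
by move=> m C h1 h2 mk; subst m; exists C.
Qed.

Section Contract.
Variables (T : finType) (M : matroid T) (r : nat) (g : T -> 'rV['F_2]_r.+1).
Hypothesis hM : rep M g.
Hypothesis sM : simple M.
Variable e : T.
Hypothesis eM : e \in ground M.
Variable L : 'M['F_2]_(r.+1, r).
Hypothesis kerL : forall v : 'rV_r.+1, (v *m L == 0) = (v <= g e)%MS.
Hypothesis fullL : row_full L.

Lemma gnz x : x \in ground M -> g x != 0.
Proof.
move=> xM; have := (sM.1 x xM); rewrite hM ?sub1set // spf1 genmxE rank_rV.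
by case: (g x != 0).
Qed.

Lemma ginj x y : x \in ground M -> y \in ground M -> g x = g y -> x = y.
Proof.
move=> xM yM e1; apply/eqP; apply: contraT => nxy.
have := sM.2 x y xM yM nxy; rewrite hM; last by rewrite subUset !sub1set xM yM.
have s : (spf g [set x; y] <= g x)%MS.
  by apply: spf_sub => z; rewrite !inE => /orP[] /eqP ->; rewrite ?e1.
have := mxrankS s; rewrite rank_rV gnz // => h1 h2.
by rewrite h2 in h1.
Qed.

Lemma ueL : g e *m L = 0.
Proof. by apply/eqP; rewrite kerL. Qed.

Lemma ker_vec v : v *m L = 0 -> v = 0 \/ v = g e.
Proof.
move/eqP; rewrite kerL => s.
have [->|nz] := eqVneq v 0; [by left | by right; apply: F2line].
Qed.

Lemma kerL_eq : (kermx L :=: g e)%MS.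
Proof.
apply/eqmxP/andP; split; last by apply/sub_kermxP; rewrite ueL.
apply/row_subP => i; rewrite -kerL -row_mul mulmx_ker.
by apply/eqP/matrixP => a b; rewrite !mxE.
Qed.

Lemma rep_contract : rep (contract M e) (fun x => g x *m L).
Proof.
move=> X; rewrite /contract /= => sX.
have eX : e \notin X by apply/negP => /(subsetP sX); rewrite !inE eqxx.
have sX' : X \subset ground M by apply: subset_trans sX _; apply: subsetDl.
rewrite !hM ?sub1set //; last by rewrite subUset sub1set eM.
rewrite spf1 rank1 ?gnz // spfU1 //.
set W := (<<g e>> + spf g X)%MS.
have := mxrank_mul_ker W L.
have -> : \rank (W :&: kermx L)%MS = 1%N.
  have ss : (kermx L <= W)%MS by rewrite kerL_eq -(genmxE (g e)) addsmxSl.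
  by rewrite (capmx_idPr ss) kerL_eq rank_rV gnz.
move=> <-; rewrite addn1 subn1 /=.
have := spfMr g L X; move/eqmxP/eqmx_rank => ->.
apply: eqmx_rank; apply/eqmxP.
apply: eqmx_trans (addsmxMr _ _ _) _.
apply: eqmx_trans _ (adds0mx _ (spf g X *m L)).
apply: adds_eqmx => //.
apply: eqmx_trans (eqmxMr _ (genmxE _)) _.
by rewrite ueL; apply: eqmx0.
Qed.

Lemma contract_nz x : x \in ground (contract M e) -> g x *m L != 0.
Proof.
rewrite /contract /= !inE => /andP[xe xM]; apply/negP => /eqP /ker_vec [].
  by move/eqP; rewrite (negPf (gnz xM)).
by move/(ginj xM eM); apply/eqP.
Qed.

Lemma contract_iff :
  iso (si (contract M e)) (PGr r) <->
  (forall v, v != 0 -> v != g e -> v \in g @: ground M \/ v + g e \in g @: ground M).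
Proof.
apply: iff_trans (iso_si_iff rep_contract contract_nz) _.
split.
- move=> himg v vnz veu.
  have : v *m L \in ground (PGr r).
    rewrite /PGr inE /=; apply/negP => /eqP /ker_vec [].
      by apply/eqP.
    by apply/eqP.
  rewrite -himg => /imsetP [x xC hx].
  have xM : x \in ground M by move: xC; rewrite /contract /= !inE => /andP[].
  have : (g x - v) *m L = 0 by rewrite mulmxBl hx subrr.
  case/ker_vec => /eqP; rewrite subr_eq.
    by rewrite add0r => /eqP <-; left; apply: imset_f.
  by move/eqP => gx; right; rewrite addrC -gx; apply: imset_f.
- move=> H; apply/eqP; rewrite eqEsubset; apply/andP; split.
    apply/subsetP => _ /imsetP [x xC ->]; rewrite /PGr inE /=.
    exact: contract_nz.
  apply/subsetP => w; rewrite /PGr inE /= => wnz.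
  set v := w *m pinvmx L.
  have vL : v *m L = w by rewrite mulmxKpV // submx_full.
  have vnz : v != 0 by apply: contraNneq wnz => v0; rewrite -vL v0 mul0mx.
  have veu : v != g e by apply: contraNneq wnz => v0; rewrite -vL v0 ueL.
  have sub : forall x, x \in ground M -> g x *m L = w -> w \in (fun x => g x *m L) @: ground (contract M e).
    move=> x xM hx; apply/imsetP; exists x => //.
    rewrite /contract /= !inE xM andbT; apply: contraNneq wnz => xe.
    by rewrite -hx xe ueL.
  case: (H v vnz veu) => /imsetP [x xM gx].
    by apply: (sub x xM); rewrite -gx.
  apply: (sub x xM); by rewrite -gx mulmxDl ueL addr0.
Qed.
End Contract.


Lemma lhs_iff (T : finType) (M : matroid T) r (g : T -> 'rV['F_2]_r.+1) :
  rep M g -> simple M ->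
  (forall e, e \in ground M -> iso (si (contract M e)) (PGr r)) <->
  (forall e, e \in ground M -> forall v, v != 0 -> v != g e ->
      v \in g @: ground M \/ v + g e \in g @: ground M).
Proof.
move=> hM sM; split=> H e eM;
  have [L [kL fL]] := exists_L (gnz hM sM eM);
  have := contract_iff hM sM eM kL fL; case=> a b; [apply: a | apply: b]; exact: H.
Qed.

Lemma span_rankE n (X : {set 'rV['F_2]_n}) : span_rank X = \rank (spf id X).
Proof. by []. Qed.

Lemma addv_eq0 n (v w : 'rV['F_2]_n) : (v + w == 0) = (v == w).
Proof. by rewrite -(vaddvv w) (inj_eq (addIr w)). Qed.

Lemma addv_eql n (v w : 'rV['F_2]_n) : (v == v + w) = (w == 0).
Proof. by rewrite -{1}(addr0 v) (inj_eq (addrI v)) eq_sym. Qed.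

Lemma flat_closed n (F : {set 'rV['F_2]_n}) : flat (PGr n) F ->
  forall v w, v \in F -> w \in F -> v != w -> v + w \in F.
Proof.
case=> sF flF v w vF wF nvw; apply: contraT => nF.
have vwG : v + w \in ground (PGr n) by rewrite /PGr inE /= addv_eq0.
have := flF _ vwG nF; rewrite /PGr /= !span_rankE spfU1 //.
have s : ((v + w)%R <= spf id F)%MS by apply: addmx_sub; apply: (spf_sup id).
by rewrite (addsmx_idPr _) ?genmxE // ltnn.
Qed.

Lemma rep_iso (T : finType) (M : matroid T) r (S : {set 'rV['F_2]_r}) :
  iso M (restrict (PGr r) S) -> exists g : T -> 'rV['F_2]_r,
   [/\ rep M g, {in ground M &, injective g} & g @: ground M = S :&: ground (PGr r)].
Proof.
case=> p [pi pim prk]; exists p; split => //.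
move=> X sX; rewrite -prk //= span_rankE spf_imset //.
by move=> x y xX yX; apply: pi; apply: (subsetP sX).
Qed.

Local Close Scope ring_scope.
Unset Implicit Arguments.

Theorem lemma3p2 (T : finType) (M : matroid T) (r : nat) :
  is_matroid M -> binary M -> simple M -> rk M (ground M) = r.+1 ->
  (forall e, e \in ground M -> iso (si (contract M e)) (PGr r)) <->
  (exists i, i <= r /\
     exists F, flat (PGr r.+1) F /\ rk (PGr r.+1) F = r - i /\
       iso M (restrict (PGr r.+1) (ground (PGr r.+1) :\: F))).
Proof.
move=> _ hb sM hr; split.
- have [g hM] := binary_rep hb hr.
  move/(lhs_iff hM sM) => H.
  set G := ground (PGr r.+1).
  set S := g @: ground M.
  have SG : S \subset G.
    by apply/subsetP => _ /imsetP [x xM ->]; rewrite /G /PGr inE /= (gnz hM sM xM).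
  set F := G :\: S.
  have clF : forall v w, v \in F -> w \in F -> v != w -> (v + w)%R \in F.
    move=> v w; rewrite /F /G /PGr /= !inE => /andP [vS vnz] /andP [wS wnz] nvw.
    rewrite addv_eq0 nvw andbT; apply/negP => /imsetP [e eM he].
    have vu : v != g e by rewrite -he addv_eql.
    case: (H e eM v vnz vu); first by rewrite (negPf vS).
    by rewrite -he GRing.addrA vaddvv GRing.add0r (negPf wS).
  have ncl : forall v, v \in S -> ~~ (v <= spf id F)%MS.
    move=> v vS; apply/negP => /(span_closed clF) [v0|].
      by move: (subsetP SG v vS); rewrite v0 /G /PGr inE eqxx.
    by rewrite !inE vS.
  have flF : flat (PGr r.+1) F.
    split; first exact: subsetDl.
    move=> x xG xF; have xS : x \in S by move: xF; rewrite /F in_setD xG andbT negbK.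
    rewrite /PGr /= !span_rankE spfU1 //; apply: rank_ltmx.
    rewrite ltmxE addsmxSr /=; apply/negP => s.
    have : (x <= spf id F)%MS.
      by apply: submx_trans s; rewrite -{1}(genmxE x) addsmxSl.
    by apply/negP; apply: ncl.
  have rF : rk (PGr r.+1) F <= r.
    rewrite /PGr /= span_rankE -ltnS ltn_neqAle rank_leq_col andbT.
    apply/negP => /eqP full.
    have [e eM] : exists e, e \in ground M.
      case: (set_0Vmem (ground M)) => [E0|[x xM]]; last by exists x.
      by move: hr; rewrite hM ?E0 // /spf big_set0 mxrank0.
    have : (g e <= spf id F)%MS by apply: submx_full; rewrite /row_full full.
    by apply/negP; apply: ncl; apply: imset_f.
  exists (r - rk (PGr r.+1) F); split; first exact: leq_subr.
  exists F; split => //; split; first by rewrite subKn.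
  exists g; split.
  + by move=> x y xM yM; apply: (ginj hM sM).
  + apply/setP => v; rewrite /F /= !inE -/G.
    case vS: (v \in S); last by case: (v != 0%R).
    by have := subsetP SG v vS; rewrite /G /PGr inE /= => ->.
  + move=> X sX; rewrite /= span_rankE spf_imset ?hM //.
    by move=> x y xX yX; apply: (ginj hM sM); apply: (subsetP sX).
- case=> i [_ [F [flF [_ hiso]]]].
  have [g [hM gi gim]] := rep_iso hiso.
  apply/(lhs_iff hM sM) => e eM v vnz veu.
  have clF := flat_closed flF.
  have geS : g e \in g @: ground M by apply: imset_f.
  move: (geS); rewrite gim !inE => /andP [/andP [geF geG] _].
  have ge0 : g e != 0%R := geG.
  apply/orP; apply: contraT.
  rewrite negb_or => /andP [n1 n2].
  have vu0 : (v + g e)%R != 0%R by rewrite addv_eq0.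
  have vF : v \in F by move: n1; rewrite vnz !andbT negbK.
  have vuF : (v + g e)%R \in F by move: n2; rewrite vu0 !andbT negbK.
  have := clF _ _ vF vuF; rewrite addv_eql ge0 GRing.addrA vaddvv GRing.add0r.
  by move=> /(_ isT); rewrite (negPf geF).
Qed.
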